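(* Let $s=(s_{i,m})_{1\le i\le b,1\le m\le M}$ be a matrix with $1\ge s_{1,m}\ge s_{2,m}\ge\cdots\ge s_{b,m}\ge0$ for each $m$ and $\sum_m s_{1,m}\le1$, and put $s_i=\sum_m s_{i,m}$. Suppose $$s_1\ge\lambda+(k-\zeta-6)\Delta\quad\text{and}\quad s_{1,m}\ge\lambda v_m-\theta_m\Delta\ \ \text{for all }1\le m\le M.$$ Then $$\left(\lambda+\Delta-\sum_{m=1}^M w_m s_{1,m}\right)\mathbb I\Bigl\{\sum_{i=1}^b s_i>\lambda+k\Delta+\tfrac1N\Bigr\}\le0.$$
   Context: Parameters: integers $N\ge2$, $b\ge1$, $M\ge2$; $\lambda=1-N^{-\alpha}$ with $0<\alpha<1/2$; $\Delta=\frac{\log N}{\sqrt N}$. Coxian parameters $\mu_1,\dots,\mu_M>0$, $p_1,\dots,p_{M-1}\in[0,1)$; $v_m=\prod_{i=1}^{m-1}p_i/\mu_m$ with $\sum_mv_m=1$; $\bar v=\min_mv_m$. $w_m=(1-p_m)\mu_m$ for $m<M$ and $w_M=\mu_M$; $w_u=\max_mw_m$, $w_l=\min_mw_m$. For $2\le m\le M$: $a_m=\frac{\mu_m}{p_1\mu_1+\mu_m}$, $b_m=(1-a_m)(1+\sum_{r=m+1}^M\frac{v_r}{v_1})-\frac{a_mv_m}{v_1}$; $\xi=\sum_{m=2}^Mb_m\prod_{j=m+1}^Ma_j$ (asserted $0<\xi<1$); $C=\sqrt{\frac{2\bar v^2\log(1/\xi)}{3M+(3M+4)\log(1/\xi)}}$;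 $\theta_m=\frac{6\mu_1v_m+5(m-1)v_m}{C}$; $\zeta=\frac{4w_ub}{w_l}\bigl[(\frac1{w_l}-\frac1{w_u})\sum_m\theta_mw_m+\frac1{w_l}+6\bigr]$; $k=\frac{\sum_m\theta_mw_m}{w_u}+(1+\frac{w_l}{4w_ub})\zeta-\sum_m\theta_m$. *)

(* Defs.v *)
From HB Require Import structures.
From mathcomp Require Import all_boot all_order all_algebra.
From mathcomp Require Import reals exp.
Set Implicit Arguments. Unset Strict Implicit. Unset Printing Implicit Defensive.
Import Order.TTheory GRing.Theory Num.Theory.
Local Open Scope ring_scope.

Section CoxianDefs.
Variable R : realType.

Definition lam (N : nat) (alpha : R) : R := 1 - powR (N%:R) (- alpha).
Definition Dlt (N : nat) : R := ln (N%:R) / Num.sqrt (N%:R).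

Variables (M : nat) (mu p : nat -> R).

Definition v (m : nat) : R := (\prod_(1 <= i < m) p i) / mu m.
Definition vbar : R := \big[Num.min/v 1]_(1 <= m < M.+1) v m.
Definition w (m : nat) : R := if (m < M)%N then (1 - p m) * mu m else mu m.
Definition wu : R := \big[Num.max/w 1]_(1 <= m < M.+1) w m.
Definition wl : R := \big[Num.min/w 1]_(1 <= m < M.+1) w m.
Definition a (m : nat) : R := mu m / (p 1 * mu 1 + mu m).
Definition bb (m : nat) : R :=
  (1 - a m) * (1 + \sum_(m.+1 <= r < M.+1) v r / v 1) - a m * v m / v 1.
Definition xi : R :=
  \sum_(2 <= m < M.+1) bb m * \prod_(m.+1 <= j < M.+1) a j.
Definition Cc : R :=
  Num.sqrt (2 * vbar ^+ 2 * ln (1 / xi) /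
            (3 * M%:R + (3 * M%:R + 4) * ln (1 / xi))).
Definition theta (m : nat) : R := (6 * mu 1 * v m + 5 * (m.-1)%:R * v m) / Cc.
Definition zeta (b : nat) : R :=
  4 * wu * b%:R / wl *
  ((1 / wl - 1 / wu) * (\sum_(1 <= m < M.+1) theta m * w m) + 1 / wl + 6).
Definition kk (b : nat) : R :=
  (\sum_(1 <= m < M.+1) theta m * w m) / wu + (1 + wl / (4 * wu * b%:R)) * zeta b
  - \sum_(1 <= m < M.+1) theta m.
End CoxianDefs.

(* Main.v *)
Require Import Defs.
From HB Require Import structures.
From mathcomp Require Import all_boot all_order all_algebra.
From mathcomp Require Import reals exp.
From mathcomp Require Import ring lra zify.
Import Order.TTheory GRing.Theory Num.Theory.
Local Open Scope ring_scope.

Section Aux.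
Variable R : realType.

Lemma bigmin_le_seq (F : nat -> R) (x0 : R) (r : seq nat) j : j \in r ->
  \big[Num.min/x0]_(m <- r) F m <= F j.
Proof.
elim: r => [//|x r IH]; rewrite inE big_cons => /orP[/eqP->|jr].
  by rewrite ge_min lexx.
by rewrite ge_min IH ?orbT.
Qed.

Lemma bigmin_le_nat (F : nat -> R) (x0 : R) n j : (1 <= j < n)%N ->
  \big[Num.min/x0]_(1 <= m < n) F m <= F j.
Proof. by move=> h; apply: bigmin_le_seq; rewrite mem_index_iota. Qed.

Lemma telesc (p : nat -> R) n : (1 <= n)%N ->
  \sum_(1 <= m < n) (1 - p m) * \prod_(1 <= i < m) p i
  = 1 - \prod_(1 <= i < n) p i.
Proof.
elim: n => [//|n IH] n1.
case: n IH n1 => [|n] IH _; first by rewrite !big_geq // subrr.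
rewrite big_nat_recr //= IH // [in RHS]big_nat_recr //=. ring.
Qed.
End Aux.

Theorem lemma13 (R : realType) (N b M : nat) (alpha : R) (mu p : nat -> R)
  (s : nat -> nat -> R)
  (hN : (2 <= N)%N) (hb : (1 <= b)%N) (hM : (2 <= M)%N)
  (ha0 : 0 < alpha) (ha1 : alpha < 1 / 2)
  (hmu : forall m, (1 <= m <= M)%N -> 0 < mu m)
  (hp : forall m, (1 <= m < M)%N -> 0 <= p m /\ p m < 1)
  (hv : \sum_(1 <= m < M.+1) v mu p m = 1)
  (hxi : 0 < xi M mu p /\ xi M mu p < 1)
  (hs1 : forall m, (1 <= m <= M)%N -> s 1%N m <= 1)
  (hsmon : forall i m, (1 <= i < b)%N -> (1 <= m <= M)%N -> s i.+1 m <= s i m)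
  (hsb : forall m, (1 <= m <= M)%N -> 0 <= s b m)
  (hsum1 : \sum_(1 <= m < M.+1) s 1%N m <= 1)
  (hS1 : \sum_(1 <= m < M.+1) s 1%N m
         >= lam N alpha + (kk M mu p b - zeta M mu p b - 6) * Dlt R N)
  (hS1m : forall m, (1 <= m <= M)%N ->
          s 1%N m >= lam N alpha * v mu p m - theta M mu p m * Dlt R N) :
  (lam N alpha + Dlt R N - \sum_(1 <= m < M.+1) w M mu p m * s 1%N m) *
  (if \sum_(1 <= i < b.+1) \sum_(1 <= m < M.+1) s i m
        > lam N alpha + kk M mu p b * Dlt R N + 1 / N%:R
   then 1 else 0) <= 0.
Proof.
set lm := lam N alpha; set D := Dlt R N.
have wpos : forall m, (1 <= m <= M)%N -> 0 < w M mu p m.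
  move=> m /andP[m1 mM]; rewrite /w; case: ifP => mlt.
    have [_ h] : 0 <= p m /\ p m < 1 by apply: hp; rewrite m1 mlt.
    by apply: mulr_gt0; [rewrite subr_gt0|apply: hmu; rewrite m1].
  by apply: hmu; rewrite m1.
have wlpos : 0 < wl M mu p.
  rewrite /wl big_nat_cond; apply: (big_ind (fun x => 0 < x)).
  - by apply: wpos; rewrite /=; lia.
  - by move=> x y hx hy; rewrite lt_min hx hy.
  - by move=> i /andP[/andP[i1 iM] _]; apply: wpos; rewrite i1 -ltnS.
have wupos : 0 < wu M mu p.
  rewrite /wu big_nat_cond; apply: (big_ind (fun x => 0 < x)).
  - by apply: wpos; rewrite /=; lia.
  - by move=> x y hx hy; rewrite lt_max hx.
  - by move=> i /andP[/andP[i1 iM] _]; apply: wpos; rewrite i1 -ltnS.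
have wle : forall m, (1 <= m <= M)%N -> wl M mu p <= w M mu p m.
  by move=> m /andP[m1 mM]; apply: bigmin_le_nat; rewrite m1 ltnS.
have hwv : \sum_(1 <= m < M.+1) w M mu p m * v mu p m = 1.
  rewrite big_nat_recr /=; last by lia.
  rewrite (eq_big_nat _ _ (F2 := fun m => (1 - p m) * \prod_(1 <= i < m) p i)); last first.
    move=> i /andP[i1 iM]; rewrite /w /v iM.
    have := hmu i; rewrite i1 (ltnW iM) => /(_ isT) h.
    by field; rewrite gt_eqF.
  rewrite telesc; last by lia.
  rewrite /w /v ltnn; field; rewrite gt_eqF // hmu //; apply/andP; split => //; lia.
set U := \sum_(1 <= m < M.+1) theta M mu p m * w M mu p m.
set T := \sum_(1 <= m < M.+1) theta M mu p m.
set S := \sum_(1 <= m < M.+1) s 1%N m.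
set X := \sum_(1 <= m < M.+1) w M mu p m * s 1%N m.
have key : X - lm * 1 + D * U >= wl M mu p * (S - lm * 1 + D * T).
  have e1 : X - lm * 1 + D * U = \sum_(1 <= m < M.+1)
     w M mu p m * (s 1%N m - lm * v mu p m + theta M mu p m * D).
    rewrite -hwv /X /U !mulr_sumr -sumrB -big_split /=.
    by apply: eq_bigr => i _; ring.
  have e2 : S - lm * 1 + D * T = \sum_(1 <= m < M.+1)
     (s 1%N m - lm * v mu p m + theta M mu p m * D).
    rewrite -hv /S /T !mulr_sumr -sumrB -big_split /=.
    by apply: eq_bigr => i _; ring.
  rewrite e1 e2 mulr_sumr; apply: ler_sum_nat => i /andP[i1 iM].
  have iM' : (1 <= i <= M)%N by rewrite i1 -ltnS.
  apply: ler_wpM2r; last exact: wle.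
  by have := hS1m i iM'; rewrite /lm /D; lra.
have ident : wl M mu p * (kk M mu p b - zeta M mu p b - 6 + T) - U = 1.
  rewrite /kk -/U -/T /zeta -/U.
  have b0 : (b%:R : R) != 0 by rewrite pnatr_eq0 -lt0n.
  field; rewrite b0 !gt_eqF //.
have h3 : wl M mu p * (S - lm) >= wl M mu p * ((kk M mu p b - zeta M mu p b - 6) * D).
  by apply: ler_wpM2l; [exact: ltW| rewrite /S /lm /D; lra].
have fin : lm + D - X <= 0.
  have e3 : D * (wl M mu p * (kk M mu p b - zeta M mu p b - 6 + T) - U) = D by rewrite ident mulr1.
  have : X >= lm + D by lra.
  lra.
case: ifP => _; [by rewrite mulr1 | by rewrite mulr0].
Qed.
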